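(* Let $a,b,c,p\in\mathbb{C}$ with $-c\notin\mathbb{N}\cup\{0\}$. Define $(u_n)$ and $(v_n)$ by $u_0=1$, $u_1=\frac{ab}{c}+p$, $u_2=\frac{a(1+a)b(1+b)}{2c(1+c)}+\frac{abp}{c}+\frac{p^2}{2}$, $v_0=1$, $v_1=\frac{ab}{c}-p$, $v_2=\frac{a(1+a)b(1+b)}{2c(1+c)}-\frac{abp}{c}+\frac{p^2}{2}$, and for all integers $n\ge2$, \[ u_{n+1}=\frac{(a+n)(b+n)+p(c+2n)}{(n+1)(c+n)}u_n-\frac{p(a+b+2n+p-1)}{(n+1)(c+n)}u_{n-1}+\frac{p^2}{(n+1)(c+n)}u_{n-2}, \] \[ v_{n+1}=\frac{(a+n)(b+n)-p(c+2n)}{(n+1)(c+n)}v_n+\frac{p(a+b+2n-p-1)}{(n+1)(c+n)}v_{n-1}+\frac{p^2}{(n+1)(c+n)}v_{n-2}. \] Then \[ \cosh(pz)F(a,b;c;z)=\sum_{n=0}^\infty\frac{u_n+v_n}{2}z^n,\qquad |z|<1. \]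
   Context: For $a\in\mathbb{C}$, $(a)_n=a(a+1)\cdots(a+n-1)$ denotes the Pochhammer symbol, with $(a)_0=1$. For $a,b,c\in\mathbb{C}$ with $-c\notin\mathbb{N}\cup\{0\}$, the Gaussian hypergeometric function is $F(a,b;c;z)=\sum_{n=0}^\infty \frac{(a)_n(b)_n}{(c)_n\,n!}z^n$, $|z|<1$. *)

(* Defs.v *)
From Stdlib Require Import Reals Factorial.
From Coquelicot Require Import Coquelicot.
Open Scope C_scope.

(* Sum of a complex series, computed componentwise (real and imaginary
   parts); it equals the sum of the series whenever the series converges. *)
Definition CSeries (u : nat -> C) : C :=
  (Series (fun n => Re (u n)), Series (fun n => Im (u n))).

Fixpoint poch (a : C) (n : nat) : C :=
  match n with
  | O => 1
  | S m => poch a m * (a + RtoC (INR m))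
  end.

Definition hypF (a b c z : C) : C :=
  CSeries (fun n => poch a n * poch b n / (poch c n * RtoC (INR (fact n))) * z ^ n).

Definition ccosh (w : C) : C :=
  CSeries (fun k => w ^ (2 * k) / RtoC (INR (fact (2 * k)))).

(* Generic third-order recurrence: x_0, x_1, x_2 given, and
   x_{N+1} = f N x_N x_{N-1} x_{N-2} for N >= 2.
   rec3_aux n = (x_n, x_{n+1}, x_{n+2}). *)
Fixpoint rec3_aux (x0 x1 x2 : C) (f : nat -> C -> C -> C -> C) (n : nat)
  : C * C * C :=
  match n with
  | O => (x0, x1, x2)
  | S m =>
      let '(y0, y1, y2) := rec3_aux x0 x1 x2 f m in
      (y1, y2, f (m + 2)%nat y2 y1 y0)
  end.

Definition rec3 (x0 x1 x2 : C) (f : nat -> C -> C -> C -> C) (n : nat) : C :=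
  fst (fst (rec3_aux x0 x1 x2 f n)).

Definition useq (a b c p : C) : nat -> C :=
  rec3 1
       (a * b / c + p)
       (a * (1 + a) * b * (1 + b) / (2 * c * (1 + c)) + a * b * p / c + p ^ 2 / 2)
       (fun N un un1 un2 =>
          let n := RtoC (INR N) in
          ((a + n) * (b + n) + p * (c + 2 * n)) / ((n + 1) * (c + n)) * un
          - p * (a + b + 2 * n + p - 1) / ((n + 1) * (c + n)) * un1
          + p ^ 2 / ((n + 1) * (c + n)) * un2).

Definition vseq (a b c p : C) : nat -> C :=
  rec3 1
       (a * b / c - p)
       (a * (1 + a) * b * (1 + b) / (2 * c * (1 + c)) - a * b * p / c + p ^ 2 / 2)
       (fun N vn vn1 vn2 =>
          let n := RtoC (INR N) in
          ((a + n) * (b + n) - p * (c + 2 * n)) / ((n + 1) * (c + n)) * vn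
          + p * (a + b + 2 * n - p - 1) / ((n + 1) * (c + n)) * vn1
          + p ^ 2 / ((n + 1) * (c + n)) * vn2).

(* Main.v *)
Require Import Defs.
From Stdlib Require Import Reals.
From Coquelicot Require Import Coquelicot.
From Stdlib Require Import Lia Factorial Lra.
Open Scope C_scope.

Fixpoint csum (g : nat -> C) (n : nat) : C :=
  match n with O => g O | S k => csum g k + g (S k) end.

Lemma csum_ext_le (f g : nat -> C) n :
  (forall j, (j <= n)%nat -> f j = g j) -> csum f n = csum g n.
Proof.
  induction n; intros H; simpl. apply H; lia.
  rewrite IHn by (intros; apply H; lia). rewrite H by lia. reflexivity.
Qed.

Lemma csum_plus (f g : nat -> C) n :
  csum (fun j => f j + g j) n = csum f n + csum g n.
Proof. induction n; simpl. reflexivity. rewrite IHn. ring. Qed.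

Lemma csum_minus (f g : nat -> C) n :
  csum (fun j => f j - g j) n = csum f n - csum g n.
Proof. induction n; simpl. reflexivity. rewrite IHn. ring. Qed.

Lemma csum_scal (x : C) (f : nat -> C) n :
  csum (fun j => x * f j) n = x * csum f n.
Proof. induction n; simpl. reflexivity. rewrite IHn. ring. Qed.

Lemma csum_zero (f : nat -> C) n :
  (forall j, (j <= n)%nat -> f j = 0) -> csum f n = 0.
Proof.
  intros H. rewrite (csum_ext_le f (fun _ => 0)) by exact H.
  clear. induction n; simpl. reflexivity. rewrite IHn. ring.
Qed.

Lemma csum_shift (g : nat -> C) n :
  csum g (S n) = g O + csum (fun k => g (S k)) n.
Proof. induction n. simpl. reflexivity.
  change (csum g (S n) + g (S (S n)) = g 0%nat + (csum (fun k => g (S k)) n + g (S (S n)))).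
  rewrite IHn. ring. Qed.

Definition ee (p : C) (k : nat) : C := p ^ k / RtoC (INR (fact k)).
Definition fh (a b c : C) (m : nat) : C :=
  poch a m * poch b m / (poch c m * RtoC (INR (fact m))).
Definition ffh (a b c : C) (m : nat) : C :=
  match m with O => 0 | S k => fh a b c k end.
Definition conv (e f : nat -> C) (n : nat) : C :=
  csum (fun j => e j * f (n - j)%nat) n.

Lemma INR_C_S (n : nat) : RtoC (INR (S n)) = RtoC (INR n) + 1.
Proof. rewrite S_INR, RtoC_plus. reflexivity. Qed.

Lemma INR_C_plus (n m : nat) : RtoC (INR (n + m)) = RtoC (INR n) + RtoC (INR m).
Proof. rewrite plus_INR, RtoC_plus. reflexivity. Qed.

Lemma fact_C_nz k : RtoC (INR (fact k)) <> 0.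
Proof.
  intros H. apply RtoC_inj in H.
  apply (INR_fact_neq_0 k). exact H.
Qed.

Lemma RtoC_nz (r : R) : r <> 0%R -> RtoC r <> 0.
Proof. intros H E. apply H. unfold RtoC in E. injection E. auto. Qed.

Lemma INR_S_C_nz k : RtoC (INR k) + 1 <> 0.
Proof. rewrite <- INR_C_S. apply RtoC_nz. apply not_0_INR. lia. Qed.

Lemma ee_S p k : (RtoC (INR k) + 1) * ee p (S k) = p * ee p k.
Proof.
  unfold ee. change (fact (S k)) with (S k * fact k)%nat.
  rewrite mult_INR, RtoC_mult, INR_C_S, Cpow_S.
  field. split. apply fact_C_nz. apply INR_S_C_nz.
Qed.

Lemma poch_nz c (hc : forall n : nat, c <> - RtoC (INR n)) m : poch c m <> 0.
Proof.
  induction m; simpl. apply C1_nz.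
  apply Cmult_neq_0. exact IHm.
  intros E. apply (hc m). rewrite <- (Cplus_0_l (- _)). rewrite <- E. ring.
Qed.

Lemma fh_rel a b c (hc : forall n : nat, c <> - RtoC (INR n)) i :
  RtoC (INR i) * (c + RtoC (INR i) - 1) * fh a b c i
  = (a + RtoC (INR i) - 1) * (b + RtoC (INR i) - 1) * ffh a b c i.
Proof.
  destruct i as [|k].
  - simpl ffh. change (INR 0) with 0%R. ring.
  - simpl ffh. unfold fh. simpl poch.
    change (fact (S k)) with (S k * fact k)%nat.
    rewrite mult_INR, !RtoC_mult, !INR_C_S.
    assert (h1 := poch_nz c hc k).
    assert (h2 : c + RtoC (INR k) <> 0).
    { intros E. apply (hc k). rewrite <- (Cplus_0_l (- _)). rewrite <- E. ring. }
    field. repeat split; auto using fact_C_nz, INR_S_C_nz.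
Qed.

Lemma conv_p p (g : nat -> C) N :
  p * conv (ee p) g N = csum (fun j => RtoC (INR j) * ee p j * g (S N - j)%nat) (S N).
Proof.
  unfold conv. rewrite <- csum_scal. rewrite csum_shift.
  rewrite (csum_ext_le (fun k => RtoC (INR (S k)) * ee p (S k) * g (S N - S k)%nat)
            (fun j => p * (ee p j * g (N - j)%nat))).
  change (INR 0) with 0%R. ring.
  intros j _. rewrite INR_C_S. simpl (S N - S j)%nat.
  replace (p * (ee p j * g (N - j)%nat)) with ((p * ee p j) * g (N-j)%nat) by ring.
  rewrite <- ee_S. ring.
Qed.

Lemma conv_pp p (g : nat -> C) N :
  p ^ 2 * conv (ee p) g N =
  csum (fun j => RtoC (INR j) * (RtoC (INR j) - 1) * ee p j * g (S (S N) - j)%nat) (S (S N)).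
Proof.
  unfold conv. rewrite <- csum_scal. rewrite csum_shift, csum_shift.
  rewrite (csum_ext_le (fun k => RtoC (INR (S (S k))) * (RtoC (INR (S (S k))) - 1) * ee p (S (S k)) * g (S (S N) - S (S k))%nat)
            (fun j => p ^ 2 * (ee p j * g (N - j)%nat))).
  rewrite INR_C_S. change (INR 0) with 0%R. ring.
  intros k _. rewrite !INR_C_S. simpl (S (S N) - S (S k))%nat.
  assert (E1 := ee_S p (S k)); rewrite INR_C_S in E1.
  assert (E2 := ee_S p k).
  set (x := RtoC (INR k)) in *.
  transitivity ((x+1+1-1) * ((x+1+1) * ee p (S (S k))) * g (N - k)%nat). ring.
  rewrite E1. transitivity (p * ((x+1) * ee p (S k)) * g (N - k)%nat). ring.
  rewrite E2. ring.
Qed.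

Lemma shift_ff a b c (w : nat -> C) N :
  csum (fun j => w j * ffh a b c (S N - j)%nat) (S N) = csum (fun j => w j * fh a b c (N - j)%nat) N.
Proof.
  change (csum (fun j => w j * ffh a b c (S N - j)%nat) N + w (S N) * ffh a b c (S N - S N)%nat
    = csum (fun j => w j * fh a b c (N - j)%nat) N).
  rewrite Nat.sub_diag. simpl ffh. rewrite Cmult_0_r, Cplus_0_r.
  apply csum_ext_le. intros j hj. destruct j as [|l]. rewrite Nat.sub_0_r. reflexivity.
  simpl. replace (N - l)%nat with (S (N - S l)) by lia. reflexivity.
Qed.

Lemma U_rec a b c p (hc : forall n : nat, c <> - RtoC (INR n)) m :
  let U := conv (ee p) (fh a b c) in
  let n := RtoC (INR (S (S m))) in
  (n + 1) * (c + n) * U (S (S (S m))) =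
  ((a + n) * (b + n) + p * (c + 2 * n)) * U (S (S m))
  - p * (a + b + 2 * n + p - 1) * U (S m) + p ^ 2 * U m.
Proof.
  intros U n.
  set (N := S (S (S m))).
  set (f := fh a b c). set (ff := ffh a b c). set (e := ee p).
  assert (E3 : U N = csum (fun j => e j * f (N - j)%nat) N) by reflexivity.
  assert (E2 : U (S (S m)) = csum (fun j => e j * ff (N - j)%nat) N).
  { unfold N, ff. rewrite shift_ff. reflexivity. }
  assert (E2p : p * U (S (S m)) = csum (fun j => RtoC (INR j) * e j * f (N - j)%nat) N).
  { unfold U. rewrite conv_p. reflexivity. }
  assert (E1p : p * U (S m) = csum (fun j => RtoC (INR j) * e j * ff (N - j)%nat) N).
  { unfold U. rewrite conv_p. unfold N, ff. rewrite shift_ff. reflexivity. }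
  assert (E1pp : p ^ 2 * U (S m) = csum (fun j => RtoC (INR j) * (RtoC (INR j) - 1) * e j * f (N - j)%nat) N).
  { unfold U. rewrite conv_pp. reflexivity. }
  assert (E0pp : p ^ 2 * U m = csum (fun j => RtoC (INR j) * (RtoC (INR j) - 1) * e j * ff (N - j)%nat) N).
  { unfold U. rewrite conv_pp. unfold N, ff. rewrite shift_ff. reflexivity. }
  set (D := (n + 1) * (c + n)). set (A := (a + n) * (b + n)).
  assert (Z : csum (fun j => D * (e j * f (N - j)%nat) - A * (e j * ff (N - j)%nat)
     - (c + 2 * n) * (RtoC (INR j) * e j * f (N - j)%nat)
     + (a + b + 2 * n - 1) * (RtoC (INR j) * e j * ff (N - j)%nat)
     + RtoC (INR j) * (RtoC (INR j) - 1) * e j * f (N - j)%nat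
     - RtoC (INR j) * (RtoC (INR j) - 1) * e j * ff (N - j)%nat) N = 0).
  { apply csum_zero. intros j hj.
    assert (Hij : RtoC (INR m) = RtoC (INR (N - j)%nat) + RtoC (INR j) - 1 - 1 - 1).
    { rewrite <- INR_C_plus. replace (N - j + j)%nat with (S (S (S m))) by (unfold N; lia).
      rewrite !INR_C_S. ring. }
    assert (rel := fh_rel a b c hc (N - j)%nat).
    fold f ff in rel.
    set (i := (N - j)%nat) in *.
    unfold D, A, n. rewrite !INR_C_S. rewrite Hij.
    set (xi := RtoC (INR i)) in *. set (xj := RtoC (INR j)).
    transitivity (e j * (xi * (c + xi - 1) * f i - (a + xi - 1) * (b + xi - 1) * ff i)).
    ring. rewrite rel. ring. }
  rewrite !csum_minus, !csum_plus, !csum_minus, !csum_scal in Z.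
  rewrite <- E3, <- E2, <- E2p, <- E1p, <- E1pp, <- E0pp in Z.
  apply Ceq_minus. rewrite <- Z. unfold D, A. ring.
Qed.

Lemma rec3_spec x0 x1 x2 f (U : nat -> C) :
  U 0%nat = x0 -> U 1%nat = x1 -> U 2%nat = x2 ->
  (forall m, U (S (S (S m))) = f (m + 2)%nat (U (S (S m))) (U (S m)) (U m)) ->
  forall n, rec3 x0 x1 x2 f n = U n.
Proof.
  intros H0 H1 H2 H3.
  assert (aux : forall n, rec3_aux x0 x1 x2 f n = (U n, U (S n), U (S (S n)))).
  { induction n. simpl. rewrite H0, H1, H2. reflexivity.
    simpl. rewrite IHn. rewrite H3. reflexivity. }
  intros n. unfold rec3. rewrite aux. reflexivity.
Qed.

Lemma c_nz c (hc : forall n : nat, c <> - RtoC (INR n)) k : c + RtoC (INR k) <> 0.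
Proof. intros E. apply (hc k). rewrite <- (Cplus_0_l (- _)). rewrite <- E. ring. Qed.

Lemma U0 a b c p : conv (ee p) (fh a b c) 0 = 1.
Proof.
  unfold conv, ee, fh. simpl. field.
Qed.
Lemma U1 a b c p (hc : forall n : nat, c <> - RtoC (INR n)) : conv (ee p) (fh a b c) 1 = a * b / c + p.
Proof.
  unfold conv, ee, fh. simpl.
  assert (h0 := c_nz c hc 0). simpl INR in h0.
  assert (hc0 : c <> 0) by (intros E; apply h0; rewrite E; ring). field; auto.
Qed.

Lemma U2 a b c p (hc : forall n : nat, c <> - RtoC (INR n)) : conv (ee p) (fh a b c) 2 =
  a * (1 + a) * b * (1 + b) / (2 * c * (1 + c)) + a * b * p / c + p ^ 2 / 2.
Proof.
  unfold conv, ee, fh. simpl.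
  assert (h0 := c_nz c hc 0). simpl INR in h0.
  assert (h1 := c_nz c hc 1). simpl INR in h1.
  assert (hc0 : c <> 0) by (intros E; apply h0; rewrite E; ring).
  assert (hc1 : 1 + c <> 0) by (intros E; apply h1; rewrite <- E; ring).
  rewrite RtoC_plus. field. split; auto.
Qed.

Lemma Cmult_eq_reg_l (d x y : C) : d * x = d * y -> d <> 0 -> x = y.
Proof. intros H Hd. rewrite <- (Cmult_1_l x), <- (Cmult_1_l y).
  rewrite <- (Cinv_l d Hd), <- !Cmult_assoc, H. reflexivity. Qed.

Lemma D_nz c (hc : forall n : nat, c <> - RtoC (INR n)) m :
  (RtoC (INR (m + 2)) + 1) * (c + RtoC (INR (m + 2))) <> 0.
Proof. apply Cmult_neq_0. apply INR_S_C_nz. apply c_nz; auto. Qed.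

Lemma useq_eq a b c p (hc : forall n : nat, c <> - RtoC (INR n)) n :
  useq a b c p n = conv (ee p) (fh a b c) n.
Proof.
  unfold useq. apply rec3_spec.
  apply U0. apply U1; auto. apply U2; auto.
  intros m. cbv zeta.
  assert (HD := D_nz c hc m).
  assert (R := U_rec a b c p hc m). cbv zeta in R.
  replace (m + 2)%nat with (S (S m)) in * by lia.
  set (nn := RtoC (INR (S (S m)))) in *.
  set (U := conv (ee p) (fh a b c)) in *.
  apply (Cmult_eq_reg_l ((nn + 1) * (c + nn))); [| exact HD].
  rewrite R. field. split; intro E; apply HD; rewrite E; ring.
Qed.

Lemma vseq_eq a b c p (hc : forall n : nat, c <> - RtoC (INR n)) n :
  vseq a b c p n = conv (ee (- p)) (fh a b c) n.
Proof.
  unfold vseq. apply rec3_spec.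
  apply U0. rewrite U1 by auto. ring.
  rewrite U2 by auto. unfold Cdiv. ring.
  intros m. cbv zeta.
  assert (HD := D_nz c hc m).
  assert (R := U_rec a b c (- p) hc m). cbv zeta in R.
  replace (m + 2)%nat with (S (S m)) in * by lia.
  set (nn := RtoC (INR (S (S m)))) in *.
  set (U := conv (ee (- p)) (fh a b c)) in *.
  apply (Cmult_eq_reg_l ((nn + 1) * (c + nn))); [| exact HD].
  rewrite R. field. split; intro E; apply HD; rewrite E; ring.
Qed.
Open Scope C_scope.

Lemma Re_sum_n (u : nat -> C) n : Re (sum_n u n) = sum_n (fun k => Re (u k)) n.
Proof.
  induction n. now rewrite !sum_O. rewrite !sum_Sn. simpl. rewrite <- IHn. reflexivity.
Qed.
Lemma Im_sum_n (u : nat -> C) n : Im (sum_n u n) = sum_n (fun k => Im (u k)) n.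
Proof.
  induction n. now rewrite !sum_O. rewrite !sum_Sn. simpl. rewrite <- IHn. reflexivity.
Qed.

Lemma is_series_C (u : nat -> C) (l : C) :
  is_series (fun n => Re (u n)) (Re l) -> is_series (fun n => Im (u n)) (Im l) ->
  is_series (V := C_NormedModule) u l.
Proof.
  unfold is_series. intros H1 H2.
  apply filterlim_locally. intros eps.
  pose proof (proj1 (filterlim_locally _ _) H1 eps) as H1'.
  pose proof (proj1 (filterlim_locally _ _) H2 eps) as H2'.
  clear H1 H2. rename H1' into H1. rename H2' into H2.
  generalize (filter_and _ _ H1 H2). apply filter_imp.
  intros n [h1 h2]. rewrite <- Re_sum_n in h1. rewrite <- Im_sum_n in h2.
  destruct l as [l1 l2]. split; assumption.
Qed.

Lemma is_series_C_inv (u : nat -> C) (l : C) :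
  is_series (V := C_NormedModule) u l ->
  is_series (fun n => Re (u n)) (Re l) /\ is_series (fun n => Im (u n)) (Im l).
Proof.
  unfold is_series. intros H. split;
  apply filterlim_locally; intros eps;
  pose proof (proj1 (filterlim_locally _ _) H eps) as H';
  revert H'; apply filter_imp; intros n [h1 h2].
  rewrite <- Re_sum_n; exact h1.
  rewrite <- Im_sum_n; exact h2.
Qed.

Lemma im_le_Cmod' (x : C) : Rabs (Im x) <= Cmod x.
Proof.
  assert (H := Cmod2_alt x). assert (H0 := Cmod_ge_0 x).
  assert (H1 := pow2_abs (Im x)). assert (H2 := Rabs_pos (Im x)).
  destruct (Rle_or_lt (Rabs (Im x)) (Cmod x)) as [h|h]; auto.
  exfalso. simpl in *. nra.
Qed.

Definition CSeries_unique (u : nat -> C) (l : C) :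
  is_series (V := C_NormedModule) u l -> CSeries u = l.
Proof.
  intros H. destruct (is_series_C_inv u l H) as [H1 H2].
  unfold CSeries. rewrite (is_series_unique _ _ H1), (is_series_unique _ _ H2).
  destruct l; reflexivity.
Qed.

Lemma ex_series_Cmod (u : nat -> C) :
  ex_series (fun n => Cmod (u n)) -> ex_series (V := C_NormedModule) u.
Proof.
  intros H. apply (ex_series_le (V := C_CompleteNormedModule) u (fun n => Cmod (u n))).
  intros n. apply Rle_refl. exact H.
Qed.

Lemma CSeries_correct (u : nat -> C) :
  ex_series (fun n => Cmod (u n)) -> is_series (V := C_NormedModule) u (CSeries u).
Proof.
  intros H. destruct (ex_series_Cmod u H) as [l Hl].
  rewrite (CSeries_unique u l Hl). exact Hl.
Qed.

Lemma Re_csum (f : nat -> C) n : Re (csum f n) = sum_f_R0 (fun k => Re (f k)) n.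
Proof. induction n; simpl; auto. rewrite <- IHn. reflexivity. Qed.
Lemma Im_csum (f : nat -> C) n : Im (csum f n) = sum_f_R0 (fun k => Im (f k)) n.
Proof. induction n; simpl; auto. rewrite <- IHn. reflexivity. Qed.

Lemma cauchy_C (h g : nat -> C) (H G : C) :
  is_series (V := C_NormedModule) h H -> is_series (V := C_NormedModule) g G ->
  ex_series (fun n => Cmod (h n)) -> ex_series (fun n => Cmod (g n)) ->
  is_series (V := C_NormedModule) (fun n => csum (fun j => h j * g (n - j)%nat) n) (H * G).
Proof.
  intros Hh Hg Ah Ag.
  destruct (is_series_C_inv _ _ Hh) as [Hh1 Hh2].
  destruct (is_series_C_inv _ _ Hg) as [Hg1 Hg2].
  assert (abs : forall u : nat -> C, ex_series (fun n => Cmod (u n)) ->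
     ex_series (fun n => Rabs (Re (u n))) /\ ex_series (fun n => Rabs (Im (u n)))).
  { intros u Hu. split; apply (ex_series_le (V := R_CompleteNormedModule) _ (fun n => Cmod (u n))); auto;
    intros n; unfold norm; simpl; rewrite Rabs_Rabsolu.
    apply re_le_Cmod. apply im_le_Cmod'. }
  destruct (abs h Ah) as [Ah1 Ah2]. destruct (abs g Ag) as [Ag1 Ag2].
  assert (M11 := is_series_mult _ _ _ _ Hh1 Hg1 Ah1 Ag1).
  assert (M22 := is_series_mult _ _ _ _ Hh2 Hg2 Ah2 Ag2).
  assert (M12 := is_series_mult _ _ _ _ Hh1 Hg2 Ah1 Ag2).
  assert (M21 := is_series_mult _ _ _ _ Hh2 Hg1 Ah2 Ag1).
  apply is_series_C.
  - assert (X := is_series_minus _ _ _ _ M11 M22).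
    eapply is_series_ext; [| exact X].
    intros n. rewrite Re_csum. simpl. unfold plus, opp; simpl.
    transitivity (sum_f_R0 (fun k => Re (h k) * Re (g (n - k)%nat) - Im (h k) * Im (g (n - k)%nat))%R n).
    rewrite minus_sum. ring.
    apply sum_eq. intros i _. reflexivity.
  - assert (X := is_series_plus _ _ _ _ M12 M21).
    eapply is_series_ext; [| exact X].
    intros n. rewrite Im_csum. simpl. unfold plus; simpl.
    transitivity (sum_f_R0 (fun k => Re (h k) * Im (g (n - k)%nat) + Im (h k) * Re (g (n - k)%nat))%R n).
    rewrite plus_sum. ring.
    apply sum_eq. intros i _. reflexivity.
Qed.

Lemma Cmod_INR (n : nat) : Cmod (RtoC (INR n)) = INR n.
Proof. rewrite Cmod_R. apply Rabs_pos_eq. apply pos_INR. Qed.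

Lemma ex_g a b c z (hc : forall n : nat, c <> - RtoC (INR n)) (hz : (Cmod z < 1)%R) :
  ex_series (fun n => Cmod (fh a b c n * z ^ n)).
Proof.
  set (gz := fun n => fh a b c n * z ^ n).
  change (ex_series (fun n => Cmod (gz n))).
  set (t := Cmod z). set (A := Cmod a). set (B := Cmod b). set (Cc := Cmod c).
  set (r := ((1 + t) / 2)%R).
  assert (ht0 : (0 <= t)%R) by apply Cmod_ge_0.
  assert (hA0 : (0 <= A)%R) by apply Cmod_ge_0.
  assert (hB0 : (0 <= B)%R) by apply Cmod_ge_0.
  assert (hC0 : (0 <= Cc)%R) by apply Cmod_ge_0.
  assert (step1 : forall n, (Cmod (gz (S n)) * ((INR n + 1) * Cmod (c + RtoC (INR n))))%R
     = (Cmod (a + RtoC (INR n)) * Cmod (b + RtoC (INR n)) * t * Cmod (gz n))%R).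
  { intros n.
    assert (rel := fh_rel a b c hc (S n)). rewrite INR_C_S in rel. simpl ffh in rel.
    set (x := RtoC (INR n)) in *.
    assert (E : (x + 1) * (c + x) * gz (S n) = (a + x) * (b + x) * z * gz n).
    { unfold gz. rewrite Cpow_S.
      transitivity ((x + 1) * (c + (x + 1) - 1) * fh a b c (S n) * (z * z ^ n)). ring.
      rewrite rel. ring. }
    apply (f_equal Cmod) in E. rewrite !Cmod_mult in E.
    unfold x in E. rewrite <- INR_C_S, Cmod_INR, S_INR in E.
    fold x in E. unfold t. rewrite <- E. ring. }
  assert (ht1 : (t < 1)%R) by exact hz.
  assert (hr : (t < r)%R) by (unfold r; lra).
  assert (hr1 : (r < 1)%R) by (unfold r; lra).
  set (d := (r - t)%R).
  set (L := (r * (1 - Cc) - t * (A + B))%R).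
  set (M := (r * Cc + t * A * B)%R).
  assert (hr0 : (0 <= r)%R) by (unfold r; lra).
  assert (hM : (0 <= M)%R).
  { unfold M. assert (0 <= t*A)%R by (apply Rmult_le_pos; auto).
    apply Rplus_le_le_0_compat; apply Rmult_le_pos; auto. }
  set (K := ((Rabs L + M) / d + Cc + 1)%R).
  destruct (INR_unbounded K) as [N HN].
  assert (step2 : forall n, (N <= n)%nat -> (Cmod (gz (S n)) <= r * Cmod (gz n))%R).
  { intros n hn.
    set (x := INR n).
    assert (hx : (x > K)%R). { unfold x. apply Rlt_le_trans with (INR N). lra. apply le_INR. exact hn. }
    assert (hd : (0 < d)%R) by (unfold d; lra).
    assert (hdx : (Rabs L + M <= d * x)%R).
    { assert (h1 : ((Rabs L + M) / d < x)%R).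
      { unfold K in hx. assert (0 <= Rabs L) by apply Rabs_pos. 
        assert (0 <= (Rabs L + M) / d)%R by (apply Rdiv_le_0_compat; lra). lra. }
      apply Rmult_lt_compat_l with (r := d) in h1; [| exact hd].
      unfold Rdiv in h1. rewrite <- Rmult_assoc, (Rmult_comm d), Rmult_assoc, Rinv_r in h1 by lra. lra. }
    assert (hx1 : (1 <= x)%R).
    { unfold K in hx. assert (0 <= Rabs L) by apply Rabs_pos.
      assert (0 <= (Rabs L + M) / d)%R by (apply Rdiv_le_0_compat; lra). lra. }
    assert (hxC : (Cc + 1 <= x)%R).
    { unfold K in hx. assert (0 <= Rabs L) by apply Rabs_pos.
      assert (0 <= (Rabs L + M) / d)%R by (apply Rdiv_le_0_compat; lra). lra. }
    assert (poly : (t * ((A + x) * (B + x)) <= r * ((x + 1) * (x - Cc)))%R).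
    { assert (hL1 : (- L <= Rabs L)%R). { rewrite <- Rabs_Ropp. apply Rle_abs. }
      assert (E : (r * ((x + 1) * (x - Cc)) - t * ((A + x) * (B + x)) = d * x * x + L * x - M)%R)
        by (unfold d, L, M; ring).
      assert (h2 : (x * (Rabs L + M) <= x * (d * x))%R) by (apply Rmult_le_compat_l; lra).
      nra. }
    assert (hAx : (Cmod (a + RtoC x) <= A + x)%R).
    { eapply Rle_trans. apply Cmod_triangle. unfold x, A, B. rewrite Cmod_INR. lra. }
    assert (hBx : (Cmod (b + RtoC x) <= B + x)%R).
    { eapply Rle_trans. apply Cmod_triangle. unfold x, A, B. rewrite Cmod_INR. lra. }
    assert (hCx : (x - Cc <= Cmod (c + RtoC x))%R).
    { assert (E : RtoC x = (c + RtoC x) + - c) by ring.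
      assert (T := Cmod_triangle (c + RtoC x) (- c)). rewrite <- E, Cmod_opp in T.
      unfold x in T |- *. rewrite Cmod_INR in T. fold x in T |- *. fold Cc in T. lra. }
    assert (S1 := step1 n). fold x in S1.
    assert (hg0 : (0 <= Cmod (gz n))%R) by apply Cmod_ge_0.
    assert (hpos : (0 < (x + 1) * Cmod (c + RtoC x))%R).
    { apply Rmult_lt_0_compat; lra. }
    apply (Rmult_le_reg_r _ _ _ hpos). rewrite S1.
    assert (hA1 : (0 <= Cmod (a + RtoC x))%R) by apply Cmod_ge_0.
    assert (hB1 : (0 <= Cmod (b + RtoC x))%R) by apply Cmod_ge_0.
    apply Rle_trans with ((A + x) * (B + x) * t * Cmod (gz n))%R.
    { apply Rmult_le_compat_r; auto. apply Rmult_le_compat_r; auto.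
      apply Rmult_le_compat; auto. }
    apply Rle_trans with (r * ((x + 1) * (x - Cc)) * Cmod (gz n))%R.
    { apply Rmult_le_compat_r; auto. lra. }
    assert (h3 : (r * ((x + 1) * (x - Cc)) <= r * ((x + 1) * Cmod (c + RtoC x)))%R).
    { apply Rmult_le_compat_l. lra. apply Rmult_le_compat_l; lra. }
    nra. }
  assert (step3 : forall k, (Cmod (gz (N + k)%nat) <= r ^ k * Cmod (gz N))%R).
  { induction k. rewrite Nat.add_0_r. simpl. lra.
    replace (N + S k)%nat with (S (N + k)) by lia.
    eapply Rle_trans. apply step2. lia. simpl.
    assert (0 <= r)%R by (unfold r; lra). nra. }
  apply (ex_series_incr_n _ N).
  apply (ex_series_le (V := R_CompleteNormedModule) _ (fun k => scal (Cmod (gz N)) (r ^ k)%R)).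
  - intros k. unfold norm; simpl. rewrite Rabs_pos_eq by apply Cmod_ge_0.
    unfold scal; simpl; unfold mult; simpl. rewrite Rmult_comm. apply step3.
  - apply (ex_series_scal (K := R_AbsRing) (V := R_NormedModule)). exists (/ (1 - r))%R. apply is_series_geom.
    rewrite Rabs_pos_eq; unfold r in *; lra.
Qed.

Definition hh (p z : C) (k : nat) : C := (ee p k + ee (- p) k) / 2 * z ^ k.

Lemma Cmod_ee p k : Cmod (ee p k) = (Cmod p ^ k / INR (fact k))%R.
Proof. unfold ee. rewrite Cmod_div by apply fact_C_nz. rewrite Cmod_pow, Cmod_INR. reflexivity. Qed.

Lemma C2_nz : (2 : C) <> 0.
Proof. intros E. injection E. lra. Qed.

Lemma Cmod_2 : Cmod 2 = 2%R.
Proof. rewrite Cmod_R. apply Rabs_pos_eq. lra. Qed.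

Lemma hh_bound p z k : (Cmod (hh p z k) <= (Cmod p * Cmod z) ^ k / INR (fact k))%R.
Proof.
  unfold hh. rewrite Cmod_mult, Cmod_div by apply C2_nz. rewrite Cmod_pow, Cmod_2.
  assert (T := Cmod_triangle (ee p k) (ee (- p) k)). rewrite !Cmod_ee, Cmod_opp in T.
  rewrite Rpow_mult_distr.
  assert (hf : (0 < INR (fact k))%R) by apply INR_fact_lt_0.
  assert (hz : (0 <= Cmod z ^ k)%R) by (apply pow_le; apply Cmod_ge_0).
  replace (Cmod p ^ k * Cmod z ^ k / INR (fact k))%R with ((Cmod p ^ k / INR (fact k)) * Cmod z ^ k)%R by (field; lra).
  apply Rmult_le_compat_r; auto. lra.
Qed.

Lemma ex_hh p z : ex_series (fun k => Cmod (hh p z k)).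
Proof.
  apply (ex_series_le (V := R_CompleteNormedModule) _ (fun k => ((Cmod p * Cmod z) ^ k / INR (fact k))%R)).
  - intros k. unfold norm; simpl. rewrite Rabs_pos_eq by apply Cmod_ge_0. apply hh_bound.
  - assert (H := is_exp_Reals (Cmod p * Cmod z)). unfold is_pseries in H.
    exists (exp (Cmod p * Cmod z)). eapply is_series_ext; [| exact H].
    intros n. simpl. unfold scal; simpl; unfold mult; simpl. rewrite pow_n_pow. reflexivity.
Qed.

Definition dd (w : C) (k : nat) : C := w ^ (2 * k) / RtoC (INR (fact (2 * k))).

Lemma hh_even p z k : hh p z (2 * k) = dd (p * z) k.
Proof.
  unfold hh, ee, dd. rewrite Cpow_mult_l, !Cpow_mult_r.
  replace ((- p) ^ 2) with (p ^ 2) by ring.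
  assert (H := fact_C_nz (2 * k)). field; repeat split; try apply C2_nz; auto.
Qed.

Lemma hh_odd p z k : hh p z (S (2 * k)) = 0.
Proof.
  unfold hh, ee. rewrite !Cpow_S, !Cpow_mult_r.
  replace ((- p) ^ 2) with (p ^ 2) by ring.
  assert (H := fact_C_nz (S (2 * k))). field; repeat split; try apply C2_nz; auto.
Qed.

Lemma plus_C (x y : C) : plus x y = x + y.
Proof. reflexivity. Qed.

Lemma sum_hh p z k : sum_n (hh p z) (S (2 * k)) = sum_n (dd (p * z)) k.
Proof.
  induction k.
  - rewrite sum_Sn, !sum_O, plus_C.
    change 1%nat with (S (2 * 0)). rewrite hh_odd.
    change 0%nat with (2 * 0)%nat at 1. rewrite hh_even, Cplus_0_r. reflexivity.
  - replace (S (2 * S k)) with (S (S (S (2 * k)))) by lia.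
    rewrite (sum_Sn _ (S (S (2 * k)))), (sum_Sn _ (S (2 * k))), IHk, (sum_Sn _ k), !plus_C.
    replace (S (S (2 * k))) with (2 * S k)%nat by lia.
    rewrite hh_even. replace (S (2 * S k)) with (S (2 * S k)) by reflexivity.
    rewrite hh_odd, Cplus_0_r. reflexivity.
Qed.

Lemma cosh_series p z :
  is_series (V := C_NormedModule) (hh p z) (ccosh (p * z)).
Proof.
  assert (Hh := CSeries_correct _ (ex_hh p z)).
  assert (Hd : is_series (V := C_NormedModule) (dd (p * z)) (CSeries (hh p z))).
  { unfold is_series in *.
    apply filterlim_ext with (fun k => sum_n (hh p z) (S (2 * k))).
    intros k. apply sum_hh.
    apply filterlim_comp with (G := eventually) (f := fun k => S (2 * k)) (g := sum_n (hh p z)).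
    apply eventually_subseq. intros n. lia. exact Hh. }
  assert (E : ccosh (p * z) = CSeries (hh p z)).
  { unfold ccosh. apply CSeries_unique. exact Hd. }
  rewrite E. exact Hh.
Qed.

Theorem theorem3p3 (a b c p z : C)
  (hc : forall n : nat, c <> - RtoC (INR n))
  (hz : (Cmod z < 1)%R) :
  is_series (V := C_NormedModule)
    (fun n => (useq a b c p n + vseq a b c p n) / 2 * z ^ n)
    (ccosh (p * z) * hypF a b c z).
Proof.
  set (g := fun n => fh a b c n * z ^ n).
  assert (Hg : is_series (V := C_NormedModule) g (hypF a b c z)).
  { change (hypF a b c z) with (CSeries g). apply CSeries_correct. apply ex_g; auto. }
  assert (M := cauchy_C (hh p z) g _ _ (cosh_series p z) Hg (ex_hh p z) (ex_g a b c z hc hz)).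
  eapply is_series_ext; [| exact M].
  intros n. simpl. rewrite useq_eq, vseq_eq by auto. unfold conv.
  transitivity (csum (fun j => (/ 2 * z ^ n) * (ee p j * fh a b c (n - j)%nat + ee (- p) j * fh a b c (n - j)%nat)) n).
  - apply csum_ext_le. intros j hj. unfold g, hh.
    replace (z ^ n) with (z ^ j * z ^ (n - j)%nat) by (rewrite <- Cpow_add_r; f_equal; lia).
    unfold Cdiv. ring.
  - rewrite csum_scal, csum_plus. unfold Cdiv. ring.
Qed.
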